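(* Let $N\ge 2$ and $A,B,C>0$ with $B>(N-1)C$, and define $D_i^N(p_1,\ldots,p_N)=A-Bp_i+C\sum_{j\ne i}p_j$ for $i=1,\ldots,N$. Define lower-level demand functions recursively by $D_i^n(p_1,\ldots,p_n)=D_i^{n+1}(p_1,\ldots,p_n,\hat p_{n+1})$ for $i\le n$, where $\hat p_{n+1}(p_1,\ldots,p_n)$ solves $D^{n+1}_{n+1}(p_1,\ldots,p_n,\hat p_{n+1})=0$. Then for each $n\in\{1,\ldots,N-1\}$, $$D_i^n(p_1,\ldots,p_n)=a_n-b_np_i+c_n\sum_{j\le n,\,j\ne i}p_j,\qquad i=1,\ldots,n,$$ where $a_N=A$, $b_N=B$, $c_N=C$ and, for $2\le n\le N$, $$a_{n-1}=a_n\Big(1+\frac{c_n}{b_n}\Big),\quad b_{n-1}=b_n\Big(1-\frac{c_n^2}{b_n^2}\Big),\quad c_{n-1}=c_n\Big(1+\frac{c_n}{b_n}\Big).$$ *)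

(* Defs.v *)
(* real field R, prices as sequences nat -> R (0-based firms). *)
From HB Require Import structures.
From mathcomp Require Import all_boot all_order all_algebra.
Set Implicit Arguments. Unset Strict Implicit. Unset Printing Implicit Defensive.
Import Order.TTheory GRing.Theory Num.Theory.
Local Open Scope ring_scope.

Definition coef_step (R : realFieldType) (t : R * R * R) : R * R * R :=
  let '(a, b, c) := t in
  (a * (1 + c / b), b * (1 - c ^+ 2 / b ^+ 2), c * (1 + c / b)).

Definition coefs (R : realFieldType) (N : nat) (A B C : R) (n : nat) : R * R * R :=
  iter (N - n) (@coef_step R) (A, B, C).

Definition coef_a (R : realFieldType) N (A B C : R) n := (coefs N A B C n).1.1.
Definition coef_b (R : realFieldType) N (A B C : R) n := (coefs N A B C n).1.2.
Definition coef_c (R : realFieldType) N (A B C : R) n := (coefs N A B C n).2.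

(* price vector p with the entry of (0-based) firm n replaced by q *)
Definition upd (R : realFieldType) (p : nat -> R) (n : nat) (q : R) : nat -> R :=
  fun j => if j == n then q else p j.

(* Main.v *)
Require Import Defs.
From HB Require Import structures.
From mathcomp Require Import all_boot all_order all_algebra.
From mathcomp Require Import ring lra.
Import Order.TTheory GRing.Theory Num.Theory.
Local Open Scope ring_scope.

Lemma coefs_step (R : realFieldType) N (A B C : R) n : (n < N)%N ->
  coefs N A B C n = coef_step (coefs N A B C n.+1).
Proof.
move=> lt; rewrite /coefs.
have -> : (N - n = (N - n.+1).+1)%N by rewrite subnSK.
by rewrite iterS.
Qed.

Lemma sum_upd_i (R : realFieldType) (p : nat -> R) n q i : (i < n)%N ->
  \sum_(j < n.+1 | (j : nat) != i) upd p n q j = \sum_(j < n | (j : nat) != i) p j + q.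
Proof.
move=> lt; rewrite big_mkcond big_ord_recr /= [in RHS]big_mkcond.
have -> : (n != i) by rewrite neq_ltn lt orbT.
rewrite /upd eqxx; congr (_ + _); apply: eq_bigr => j _ /=.
by rewrite (ltn_eqF (ltn_ord j)).
Qed.

Lemma sum_upd_n (R : realFieldType) (p : nat -> R) n q :
  \sum_(j < n.+1 | (j : nat) != n) upd p n q j = \sum_(j < n) p j.
Proof.
rewrite big_mkcond big_ord_recr /= eqxx addr0.
apply: eq_bigr => j _ /=; by rewrite /upd (ltn_eqF (ltn_ord j)).
Qed.

Lemma sum_split (R : realFieldType) (p : nat -> R) n i : (i < n)%N ->
  \sum_(j < n) p j = p i + \sum_(j < n | (j : nat) != i) p j.
Proof.
by move=> lt; rewrite (bigD1 (Ordinal lt)) //=.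
Qed.

Theorem proposition2p4 (R : realFieldType) (N : nat) (A B C : R)
    (D : nat -> (nat -> R) -> nat -> R) :
  (2 <= N)%N -> 0 < A -> 0 < B -> 0 < C -> (N - 1)%:R * C < B ->
  (* top level demand: firms 0, ..., N-1 *)
  (forall (p : nat -> R) (i : nat), (i < N)%N ->
     D N p i = A - B * p i + C * \sum_(j < N | (j : nat) != i) p j) ->
  (* recursive definition of lower-level demands: D^n(p) = D^{n+1}(p, phat)
     whenever phat solves D^{n+1}_{n+1}(p, phat) = 0 *)
  (forall (n : nat) (p : nat -> R) (q : R), (1 <= n < N)%N ->
     D n.+1 (upd p n q) n = 0 ->
     forall i : nat, (i < n)%N -> D n p i = D n.+1 (upd p n q) i) ->
  forall n : nat, (1 <= n <= N - 1)%N ->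
  forall (p : nat -> R) (i : nat), (i < n)%N ->
    D n p i = coef_a N A B C n - coef_b N A B C n * p i
              + coef_c N A B C n * \sum_(j < n | (j : nat) != i) p j.
Proof.
move=> N2 A0 B0 C0 BC Htop Hrec.
suff main : forall k n, (n + k)%N = N -> (1 <= n)%N ->
  [/\ 0 < coef_c N A B C n, (n - 1)%:R * coef_c N A B C n < coef_b N A B C n &
   forall p i, (i < n)%N -> D n p i = coef_a N A B C n - coef_b N A B C n * p i
              + coef_c N A B C n * \sum_(j < n | (j : nat) != i) p j].
  move=> n /andP [n1 nN] p i lt.
  have Hnk : (n + (N - n))%N = N by rewrite subnKC // (leq_trans nN) // leq_subr.
  by have [_ _ ->] := main (N - n)%N n Hnk n1.
elim=> [|k IH] n.
  rewrite addn0 => -> _.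
  rewrite /coef_a /coef_b /coef_c /coefs subnn /=.
  by split; [| |exact: Htop].
move=> Hk n1.
have nN : (n < N)%N by rewrite -Hk addnS ltnS leq_addr.
have [||c0 bc Hf] := IH n.+1; first by rewrite addSnnS.
  done.
have := @coefs_step R N A B C n nN.
rewrite /coef_a /coef_b /coef_c in c0 bc Hf *.
case: (coefs N A B C n.+1) c0 bc Hf => [[a b] c] /= c0 bc Hf ->.
rewrite /= subn1 /= in bc.
have b0 : 0 < b.
  apply: le_lt_trans bc; apply: mulr_ge0 => //; exact: ltW.
have bne : b != 0 by rewrite gt_eqF.
split.
- apply: mulr_gt0 => //; apply: addr_gt0 => //; exact: divr_gt0.
-
  have key : b * (1 - c ^+ 2 / b ^+ 2) - (n - 1)%:R * (c * (1 + c / b))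
      = (b - n%:R * c) * (b + c) / b.
    case: n {IH Hk nN Hf bc} n1 => [|m] // _.
    rewrite subn1 /= -natr1. by field.
  rewrite -subr_gt0 key; apply: divr_gt0 => //; apply: mulr_gt0.
    by rewrite subr_gt0.
  exact: addr_gt0.
- move=> p i lt.
  set q := (a + c * \sum_(j < n) p j) / b.
  have Hq : D n.+1 (upd p n q) n = 0.
    rewrite Hf // sum_upd_n /upd eqxx /q; field; exact: bne.
  rewrite (Hrec n p q) ?n1 ?nN // Hf ?(ltn_trans lt) //.
  rewrite (@sum_upd_i R p n q i lt) /upd (ltn_eqF lt) /q (@sum_split R p n i lt).
  rewrite /=; by field.
Qed.
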